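(* Let $d\ge1$, $s\in(0,1)$ and $0<\lambda\le\Lambda$. There exist $C>0$ and $\gamma>0$, depending only on $d,s,\lambda,\Lambda$, with the following property. Let $K:\mathbb{R}^d\to\mathbb{R}$ be a measurable kernel with $\lambda|y|^{-d-s}\le K(y)\le\Lambda|y|^{-d-s}$ and $K(y)=K(-y)$ for all $y\ne0$. Let $E\subset\mathbb{R}^d$ be a Borel set, $x\in\partial E$ and $r>0$. If $|E\cap B_r(x)|\le\gamma|B_r|$, then \[ \int_{B_r(x)\setminus B_{r/2}(x)}\tilde\chi_E(y)K(x-y)\,dy\ge\frac{C}{r^s}. \]
   Context: $B_\rho(x)$ is the open ball of radius $\rho$ centred at $x$, $B_\rho=B_\rho(0)$, and $|F|$ denotes Lebesgue measure. $\tilde\chi_E=\chi_{\mathbb{R}^d\setminus E}-\chi_E$. *)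

(* Defs.v *)
(* Euclidean space R^d is modelled as d.-tuple R,
   with the product (= Borel) sigma-algebra provided by MathComp-Analysis. *)
From HB Require Import structures.
From mathcomp Require Import all_boot all_order all_algebra.
From mathcomp Require Import all_classical all_reals all_analysis.
Set Implicit Arguments. Unset Strict Implicit. Unset Printing Implicit Defensive.
Import Order.TTheory GRing.Theory Num.Theory.
Local Open Scope classical_set_scope.
Local Open Scope ring_scope.

Section Rd.
Variable R : realType.

Definition tsub d (x y : d.-tuple R) : d.-tuple R :=
  [tuple tnth x i - tnth y i | i < d].

Definition enorm d (x : d.-tuple R) : R :=
  Num.sqrt (\sum_(i < d) tnth x i ^+ 2).

Definition eball d (x : d.-tuple R) (rho : R) : set (d.-tuple R) :=
  [set y | enorm (tsub y x) < rho].

Definition tzero d : d.-tuple R := [tuple 0 | _ < d].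

(* Lebesgue measure on R^d (on Borel sets), defined as iterated product of
   the one-dimensional Lebesgue measure (Tonelli):
   leb_0 = Dirac mass at the unique point of R^0,
   leb_{n+1}(A) = \int_R leb_n({t | (x :: t) \in A}) dx. *)
Fixpoint lebRd (n : nat) : set (n.-tuple R) -> \bar R :=
  match n with
  | 0 => fun A => \d_([tuple] : 0.-tuple R) A
  | n'.+1 => fun A =>
      (\int[@lebesgue_measure R]_x @lebRd n' [set t | A (@cons_tuple n' R (x : R) t)])%E
  end.

Definition eboundary d (E : set (d.-tuple R)) : set (d.-tuple R) :=
  [set x | forall rho : R, 0 < rho ->
     (exists2 y, E y & eball x rho y) /\ (exists2 y, ~ E y & eball x rho y)].

Definition tchi d (E : set (d.-tuple R)) (y : d.-tuple R) : R :=
  if `[< E y >] then -1 else 1.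

End Rd.

(* Main.v *)
Require Import Defs.
From HB Require Import structures.
From mathcomp Require Import all_boot all_order all_algebra.
From mathcomp Require Import all_classical all_reals all_analysis.
From mathcomp Require Import measurable_realfun ring lra.
Import Order.TTheory GRing.Theory Num.Theory.
Local Open Scope classical_set_scope.
Local Open Scope ring_scope.

Set Implicit Arguments. Unset Strict Implicit. Unset Printing Implicit Defensive.

Section M.
Variable R : realType.

Definition Pm n := [/\ @lebRd R n set0 = 0%E, forall A, (0 <= @lebRd R n A)%E,
  semi_sigma_additive (@lebRd R n) & sigma_finite setT (@lebRd R n)].

Definition lebW n (H : Pm n) := @lebRd R n.

Section inst.
Variables (n : nat) (H : Pm n).
Let m0 : lebW H set0 = 0%E. Proof. have [a b c e] := H. exact: a. Qed.
Let mge0 A : (0 <= lebW H A)%E. Proof. have [a b c e] := H. exact: b. Qed.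
Let msig : semi_sigma_additive (lebW H). Proof. have [a b c e] := H. exact: c. Qed.
HB.instance Definition _ := isMeasure.Build _ _ _ (lebW H) m0 mge0 msig.
Let msf : sigma_finite setT (lebW H). Proof. have [a b c e] := H. exact: e. Qed.
HB.instance Definition _ := Measure_isSigmaFinite.Build _ _ _ (lebW H) msf.
End inst.

Definition gc n (p : R * n.-tuple R) : n.+1.-tuple R := [tuple of p.1 :: p.2].
Definition gi n (t : n.+1.-tuple R) : R * n.-tuple R := (thead t, [tuple of behead t]).

Lemma gc_meas n : measurable_fun setT (@gc n).
Proof. exact: measurable_cons. Qed.

Lemma gi_meas n : measurable_fun setT (@gi n).
Proof.
apply/measurable_fun_pairP; split.
  exact: measurable_tnth.
exact: measurable_behead.
Qed.

Lemma gcK n : cancel (@gi n) (@gc n).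
Proof. by move=> t; apply/val_inj => /=; rewrite /gi /= [in RHS](tuple_eta t). Qed.

Lemma giK n : cancel (@gc n) (@gi n).
Proof. by case=> x t; rewrite /gi /gc /=; congr pair; apply/val_inj. Qed.

Lemma lebRdS n (H : Pm n) A :
  @lebRd R n.+1 A = ((@lebesgue_measure R) \x (lebW H))%E (@gc n @^-1` A).
Proof.
rewrite /= /product_measure1; apply: eq_integral => x _ /=.
congr (lebRd _); apply/seteqP; split => t /=; rewrite /xsection /= in_setE //.
Qed.


Lemma lebRdE n (H : Pm n) :
  @lebRd R n.+1 = (fun A => ((@lebesgue_measure R) \x (lebW H))%E (@gc n @^-1` A)).
Proof. by apply/funext => A; exact: lebRdS. Qed.

Lemma Pm0 : Pm 0.
Proof.
have E : @lebRd R 0 = (@dirac _ _ ([tuple] : 0.-tuple R) R) by [].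
split; rewrite E.
- exact: measure0.
- by move=> A; exact: measure_ge0.
- exact: measure_semi_sigma_additive.
- apply: fin_num_fun_sigma_finite; first by rewrite measure0.
  by move=> A _; rewrite diracE.
Qed.

Lemma prod_sf n (H : Pm n) : sigma_finite setT ((@lebesgue_measure R) \x (lebW H))%E.
Proof.
have /sigma_finiteP[F [TF ndF Foo]] := sigma_finiteT (@lebesgue_measure R).
have /sigma_finiteP[G [TG ndG Goo]] := sigma_finiteT (lebW H).
exists (fun n => F n `*` G n).
 rewrite -setXTT TF TG predeqE => -[x y]; split.
    move=> [/= [n0 _ Fnx] [k _ Gky]]; exists (maxn n0 k) => //; split.
    - by move: x Fnx; exact/subsetPset/ndF/leq_maxl.
    - by move: y Gky; exact/subsetPset/ndG/leq_maxr.
  by move=> [n0 _ []/= ? ?]; split; exists n0.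
move=> k; have [? ?] := Foo k; have [? ?] := Goo k.
split; first exact: measurableX.
by rewrite product_measure1E// lte_mul_pinfty// ge0_fin_numE.
Qed.

Lemma PmS n : Pm n -> Pm n.+1.
Proof.
move=> H; split; rewrite (lebRdE H).
- by rewrite preimage_set0 measure0.
- by move=> A; exact: measure_ge0.
- move=> F mF tF mU.
  rewrite preimage_bigcup.
  apply: (@measure_semi_sigma_additive _ _ _ ((@lebesgue_measure R) \x (lebW H))%E (fun i => @gc n @^-1` F i)).
  + by move=> i; rewrite -[X in measurable X]setTI; exact: gc_meas.
  + move=> i j _ _ [p [Fi Fj]]; apply: (tF i j) => //; by exists (gc p).
  + by rewrite -preimage_bigcup -[X in measurable X]setTI; exact: gc_meas.
- have [F FT Fm] := prod_sf H.
  exists (fun k => @gi n @^-1` F k).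
    by rewrite -preimage_bigcup -FT.
  move=> k; have [mFk Fk] := Fm k; split.
    by rewrite -[X in measurable X]setTI; exact: gi_meas.
  rewrite /= (_ : @gc n @^-1` (@gi n @^-1` F k) = F k) //; apply/seteqP; split => p /=; by rewrite giK.
Qed.

Lemma Pmall n : Pm n.
Proof. by elim: n => [|n IH]; [exact: Pm0 | exact: PmS]. Qed.


Definition box n (a b : nat -> R) : set (n.-tuple R) :=
  [set t | forall i : 'I_n, a i <= tnth t i <= b i].
Arguments box : clear implicits.

Lemma box_gc n a b :
  @gc n @^-1` box n.+1 a b = `[a 0%N, b 0%N]%classic `*` box n (a \o S) (b \o S).
Proof.
apply/seteqP; split => -[x t] /=.
  move=> h; split.
    by have := h ord0; rewrite /gc tnth0 /= in_itv.
  by move=> i; have := h (lift ord0 i); rewrite /gc tnthS.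
move=> [/= xab tab] i; case: (unliftP ord0 i) => [j ->|->].
  by rewrite /gc tnthS; exact: tab.
by rewrite /gc tnth0; move: xab; rewrite in_itv.
Qed.

Lemma box_meas n a b : measurable (box n a b).
Proof.
elim: n a b => [|n IH] a b.
  rewrite (_ : box 0 a b = setT) //; apply/seteqP; split => t //= _ [] //.
rewrite (_ : box n.+1 a b = @gi n @^-1` (@gc n @^-1` box n.+1 a b)); last first.
  by apply/seteqP; split => t /=; rewrite gcK.
rewrite -[X in measurable X]setTI; apply: gi_meas => //.
rewrite box_gc; apply: measurableX => //.
Qed.

Lemma box_leb n a b : (forall i, a i <= b i) ->
  @lebRd R n (box n a b) = (\prod_(i < n) (b i - a i))%:E.
Proof.
elim: n a b => [|n IH] a b ab.
  rewrite (_ : box 0 a b = setT); last first.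
    apply/seteqP; split => t //= _ [] //.
  by rewrite big_ord0 /= diracE in_setT.
rewrite (lebRdS (Pmall n)) box_gc product_measure1E //; last exact: box_meas.
have L : @lebesgue_measure R `[a 0%N, b 0%N]%classic = (b 0%N - a 0%N)%:E.
  rewrite lebesgue_measure_itv /= lte_fin; case: ltP => // h.
  have h2 := ab 0%N; have -> : b 0%N = a 0%N by apply/eqP; rewrite eq_le h2 h.
  by rewrite subrr.
have L2 := IH (a \o S) (b \o S) (fun i => ab i.+1).
transitivity ((b 0%N - a 0%N)%:E * (\prod_(i < n) ((b \o S) i - (a \o S) i))%:E)%E.
  by congr (_ * _)%E; [exact: L | exact: L2].
by rewrite big_ord_recl -EFinM.
Qed.

End M.

Section G.
Variable R : realType.
Variable d : nat.
Implicit Types (t x y : d.-tuple R).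

Lemma tsubE x y i : tnth (@tsub R d x y) i = tnth x i - tnth y i.
Proof. by rewrite /tsub tnth_mktuple. Qed.

Lemma enorm_ge0 t : 0 <= enorm t.
Proof. exact: sqrtr_ge0. Qed.

Lemma enorm_tnth t i : `|tnth t i| <= enorm t.
Proof.
rewrite /enorm -sqrtr_sqr; apply: ler_wsqrtr.
rewrite (bigD1 i) //= lerDl; apply: sumr_ge0 => j _; exact: sqr_ge0.
Qed.

Lemma enorm_lt t r : 0 < r -> (enorm t < r) = (\sum_(i < d) tnth t i ^+ 2 < r ^+ 2).
Proof.
move=> r0; rewrite /enorm -{1}(ger0_norm (ltW r0)) -sqrtr_sqr ltr_sqrt //.
exact: exprn_gt0.
Qed.

Lemma enormB x y : enorm (tsub x y) = enorm (tsub y x).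
Proof.
rewrite /enorm; congr Num.sqrt; apply: eq_bigr => i _.
by rewrite !tsubE -opprB sqrrN.
Qed.

Lemma enorm0 : enorm (@tzero R d) = 0.
Proof.
rewrite /enorm big1 ?sqrtr0 // => i _; by rewrite /tzero tnth_mktuple expr0n.
Qed.

Lemma tsub_meas x : measurable_fun setT (fun y => @tsub R d x y).
Proof.
apply/measurable_fun_tnthP => i /=.
rewrite (_ : _ \o _ = (fun y => tnth x i - tnth y i)); last first.
  by apply/funext => y /=; rewrite tsubE.
apply: measurable_realfun.measurable_funB => //; exact: measurable_tnth.
Qed.

Lemma eball_meas x r : 0 < r -> measurable (eball x r).
Proof.
move=> r0.
rewrite (_ : eball x r = (fun y => \sum_(i < d) (tnth y i - tnth x i) ^+ 2) @^-1`
   `]-oo, r ^+ 2[%classic); last first.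
  have E y : (enorm (tsub y x) < r) = (\sum_(i < d) (tnth y i - tnth x i) ^+ 2 < r ^+ 2).
    by rewrite enorm_lt //; congr (_ < _); apply: eq_bigr => i _; rewrite tsubE.
  by apply/seteqP; split => y /=; rewrite /eball /= E in_itv /=.
rewrite -[X in measurable X]setTI; apply: measurable_sum => //.
move=> i; apply: measurable_realfun.measurable_funX; apply: measurable_realfun.measurable_funB => //.
exact: measurable_tnth.
Qed.


Lemma tnth_nth0 x (i : 'I_d) : tnth x i = nth 0 x i.
Proof. exact: tnth_nth. Qed.

Definition oa x r i := nth 0 x i - r.
Definition ob x r i := nth 0 x i + r.

Lemma ball_in_box x r : eball x r `<=` @box R d (oa x r) (ob x r).
Proof.
move=> y /= yr i; have := le_lt_trans (enorm_tnth _ i) yr.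
rewrite tsubE (tnth_nth0 x i) /oa /ob ltr_norml => /andP[h1 h2].
apply/andP; split.
  lra.
lra.
Qed.

Lemma obox_vol x r : 0 <= r ->
  @lebRd R d (@box R d (oa x r) (ob x r)) = ((2 * r) ^+ d)%:E.
Proof.
move=> r0; rewrite box_leb; last first.
  by move=> i; rewrite /oa /ob; lra.
congr EFin; rewrite (eq_bigr (fun=> 2 * r)); last first.
  by move=> i _; rewrite /oa /ob; lra.
by rewrite prodr_const card_ord.
Qed.

Definition ia x r i := nth 0 x i + (if i == 0%N then r / 2 else 0).
Definition ib x r i := nth 0 x i + (if i == 0%N then 3 * r / 4 else r / (4 * d%:R)).
Definition cin := \prod_(i < d) (if i == 0%N :> nat then 1 / 4 else 1 / (4 * d%:R) : R).

Lemma cin_gt0 : 0 < cin.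
Proof.
apply: prodr_gt0 => i _; case: ifP => _; first by [].
apply: divr_gt0 => //; apply: mulr_gt0 => //.
by rewrite ltr0n; case: i => i id; exact: (leq_ltn_trans (leq0n i) id).
Qed.

Lemma ibox_vol x r : 0 <= r ->
  @lebRd R d (@box R d (ia x r) (ib x r)) = (cin * r ^+ d)%:E.
Proof.
move=> r0; rewrite box_leb; last first.
  move=> i; rewrite /ia /ib lerD2l; case: ifP => _; first lra.
  by apply: divr_ge0 => //; apply: mulr_ge0.
congr EFin.
rewrite (eq_bigr (fun i : 'I_d => (if i == 0%N :> nat then 1 / 4 else 1 / (4 * d%:R)) * r)); last first.
  move=> i _; rewrite /ia /ib opprD addrACA subrr add0r; case: ifP => _; first lra.
  by rewrite subr0 mulrC mul1r.
by rewrite big_split /= prodr_const card_ord.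
Qed.


Lemma box_in_annulus x r (d0 : (0 < d)%N) : 0 < r ->
  @box R d (ia x r) (ib x r) `<=` eball x r `\` eball x (r / 2).
Proof.
move=> r0 y yb.
pose i0 : 'I_d := Ordinal d0.
pose u i := tnth (tsub y x) i.
pose w := r / (4 * d%:R).
have Dge1 : 1 <= (d%:R : R) by rewrite ler1n.
have hw : w * (4 * d%:R) = r by rewrite /w mulfVK // mulf_neq0 // gt_eqF // (lt_le_trans ltr01 Dge1).
have hu i : tnth y i - nth 0 x i = u i by rewrite /u tsubE (tnth_nth0 x).
have u0b : r / 2 <= u i0 <= 3 * r / 4.
  have := yb i0; rewrite /ia /ib /= -hu; move=> /andP[h1 h2]; apply/andP; split; lra.
have uib i : i != i0 -> 0 <= u i <= w.
  move=> ii0; have := yb i; rewrite /ia /ib /= -hu.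
  have -> : (val i == 0%N) = false.
    by apply/negbTE; apply: contra ii0 => /eqP h; apply/eqP/val_inj.
  move=> /andP[h1 h2]; apply/andP; split; rewrite /w; lra.
have Sdec : \sum_(i < d) u i ^+ 2 = u i0 ^+ 2 + \sum_(i < d | i != i0) u i ^+ 2.
  by rewrite (bigD1 i0).
have Rle : \sum_(i < d | i != i0) u i ^+ 2 <= w ^+ 2 * d%:R.
  apply: (@le_trans _ _ (\sum_(i < d | i != i0) w ^+ 2)).
    apply: ler_sum => i ii0; have /andP[h1 h2] := uib i ii0; nra.
  apply: (@le_trans _ _ (\sum_(i < d) w ^+ 2)).
    by rewrite [X in _ <= X](bigD1 i0) //= lerDr sqr_ge0.
  by rewrite sumr_const card_ord mulr_natr.
have Rge : 0 <= \sum_(i < d | i != i0) u i ^+ 2 by apply: sumr_ge0 => i _; exact: sqr_ge0.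
have wD : w ^+ 2 * d%:R <= r ^+ 2 / 16.
  rewrite -hw; have h : 0 <= w ^+ 2 * d%:R * (d%:R - 1).
    by apply: mulr_ge0; [apply: mulr_ge0; [exact: sqr_ge0|lra]|lra].
  nra.
split.
  rewrite /eball /= enorm_lt // Sdec; have /andP[h1 h2] := u0b; nra.
rewrite /eball /= enorm_lt; last lra.
rewrite Sdec; have /andP[h1 h2] := u0b; apply/negP; rewrite -leNgt; nra.
Qed.

End G.

Lemma integrable_bnd (R : realType) dd (T : measurableType dd)
  (mu : {measure set T -> \bar R}) (D : set T) (f : T -> R) (c : R) :
  measurable D -> (mu D < +oo)%E -> measurable_fun D f ->
  (forall y, D y -> `|f y| <= c) -> mu.-integrable D (EFin \o f).
Proof.
move=> mD muD mf fc; apply/integrableP; split; first exact/measurable_EFinP.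
apply: (@le_lt_trans _ _ ((`|c|)%:E * mu D)%E).
  apply: integral_le_bound => //; first exact/measurable_EFinP.
  apply: aeW => y Dy /=; rewrite lee_fin (le_trans (fc y Dy)) // ler_norm.
  by [].
by apply: lte_mul_pinfty.
Qed.

Lemma tchiE (R : realType) d (E : set (d.-tuple R)) :
  tchi E = (fun y => 1 - 2 * \1_E y).
Proof.
apply/funext => y; rewrite /tchi indicE.
case: (pselect (E y)) => h.
  by rewrite asboolT // mem_set //= mulr1n mulr1; lra.
by rewrite asboolF // memNset //= mulr0n mulr0; lra.
Qed.

Lemma tchi_meas (R : realType) d (E : set (d.-tuple R)) :
  measurable E -> measurable_fun setT (tchi E).
Proof.
move=> mE; rewrite tchiE.
apply: measurable_realfun.measurable_funB => //.
apply: measurableT_comp => //; exact: measurable_indic.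
Qed.

Lemma powN_mono (R : realType) (p u v : R) : 0 <= p -> 0 < u -> u <= v ->
  v `^ (- p) <= u `^ (- p).
Proof.
move=> p0 u0 uv; rewrite !powRN lef_pV2 ?posrE ?powR_gt0 //; last exact: (lt_le_trans u0).
apply: ge0_ler_powR => //; rewrite nnegrE ltW //; exact: (lt_le_trans u0).
Qed.

Lemma pow_half (R : realType) (r p : R) : 0 < r ->
  (r / 2) `^ (- p) = 2 `^ p * (r `^ p)^-1.
Proof.
move=> r0; rewrite powRN powRM ?invr_ge0 ?ltW //.
rewrite -[2^-1](@powR_inv1 _ 2) // -powRrM mulN1r powRN invfM invrK mulrC //.
Qed.

Lemma powD_nat (R : realType) (r s : R) (d : nat) : 0 < r ->
  r `^ (d%:R + s) = r ^+ d * r `^ s.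
Proof.
move=> r0; rewrite powRD; last by apply/implyP => _; rewrite gt_eqF.
by rewrite powR_mulrn // ltW.
Qed.

Lemma two_pow (R : realType) (s : R) (d : nat) : 0 <= s <= 1 ->
  2 `^ (d%:R + s) <= 2 ^+ d.+1.
Proof.
move=> /andP[s0 s1]; rewrite powD_nat // exprSr ler_pM2l ?exprn_gt0 //.
rewrite -[X in _ <= X](@powRr1 _ 2) //; apply: ler_powR => //.
by rewrite ler1n.
Qed.

Unset Implicit Arguments. Set Strict Implicit. Set Printing Implicit Defensive.

Theorem lemma4p1 (R : realType) (d : nat) (s lam Lam : R) :
  (1 <= d)%N -> 0 < s -> s < 1 -> 0 < lam -> lam <= Lam ->
  exists C : R, exists gamma : R, 0 < C /\ 0 < gamma /\
    forall (K : d.-tuple R -> R) (E : set (d.-tuple R)) (x : d.-tuple R) (r : R),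
      measurable_fun [set: d.-tuple R] K ->
      (forall y, y <> @tzero R d ->
         lam * enorm y `^ (- (d%:R + s)) <= K y /\
         K y <= Lam * enorm y `^ (- (d%:R + s))) ->
      (forall y, y <> @tzero R d ->
         K y = K [tuple - tnth y i | i < d]) ->
      measurable E ->
      eboundary E x ->
      0 < r ->
      (@lebRd R d (E `&` eball x r) <= gamma%:E * @lebRd R d (eball (@tzero R d) r))%E ->
      ((C / r `^ s)%:E <=
        \int[@lebRd R d]_(y in eball x r `\` eball x (r / 2))
           (tchi E y * K (tsub x y))%:E)%E.
Proof.
move=> d1 s0 s1 lam0 lamLam.
have Lam0 : 0 < Lam by exact: lt_le_trans lam0 lamLam.
pose c0 := cin R d.
have c00 : 0 < c0 by exact: cin_gt0.
pose A := Lam * 2 ^+ d.+1.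
pose Q : R := 2 ^+ d.
have A0 : 0 < A by rewrite /A mulr_gt0 // exprn_gt0.
have Q0 : 0 < Q by rewrite /Q exprn_gt0.
pose C := lam * c0 / 2.
pose gam := lam * c0 / (2 * (A + lam) * Q).
have C0 : 0 < C by rewrite /C divr_gt0 // mulr_gt0.
have gam0 : 0 < gam.
  by rewrite /gam divr_gt0 ?mulr_gt0 // ?addr_gt0.
have gamE : gam * Q * (A + lam) = C.
  rewrite /gam /C; field.
  by rewrite !gt_eqF // addr_gt0.
exists C, gam; split => //; split => //.
move=> K E x r mK Kb Ks mE xb r0 hyp.
pose H := Pmall R d.
change (is_true (lebW H (E `&` eball x r) <= gam%:E * lebW H (eball (@tzero R d) r))%E) in hyp.
change (is_true ((C / r `^ s)%:E <= \int[lebW H]_(y in eball x r `\` eball x (r / 2))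
           (tchi E y * K (tsub x y))%:E)%E).
set D := eball x r `\` eball x (r / 2).
have r20 : 0 < r / 2 by rewrite divr_gt0.
have mB : measurable (eball x r) by exact: eball_meas.
have mD : measurable D by apply: measurableD => //; exact: eball_meas.
have d0 : (0 < d)%N by [].
have muD_le : (lebW H D <= ((2 * r) ^+ d)%:E)%E.
  rewrite -(obox_vol x (ltW r0)); apply: le_measure; rewrite ?inE //.
    exact: box_meas.
  by move=> y [yB _]; exact: ball_in_box.
have muD_ge : ((c0 * r ^+ d)%:E <= lebW H D)%E.
  rewrite -(ibox_vol x (ltW r0)); apply: le_measure; rewrite ?inE //.
    exact: box_meas.
  exact: box_in_annulus.
have muED_le : (lebW H (E `&` D) <= (gam * ((2 * r) ^+ d))%:E)%E.
  apply: (@le_trans _ _ (lebW H (E `&` eball x r))).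
    apply: le_measure; rewrite ?inE //; try exact: measurableI.
    by apply: setIS => y [].
  apply: (le_trans hyp); rewrite [X in (_ <= X)%E]EFinM; apply: lee_wpmul2l; first by rewrite lee_fin ltW.
  rewrite -(obox_vol (@tzero R d) (ltW r0)); apply: le_measure; rewrite ?inE //.
    exact: eball_meas.
    exact: box_meas.
  exact: ball_in_box.
have muD_fin : (lebW H D < +oo)%E by apply: le_lt_trans muD_le _; exact: ltry.
pose p := d%:R + s.
have p0 : 0 <= p by rewrite /p addr_ge0 // ltW.
pose e := (r `^ p)^-1.
have e0 : 0 < e by rewrite /e invr_gt0 powR_gt0.
pose be := lam * r `^ (- p).
pose al := Lam * (r / 2) `^ (- p).
have beE : be = lam * e by rewrite /be powRN.
have hzn y : D y -> r / 2 <= enorm (tsub x y) < r.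
  move=> [yB yN]; rewrite enormB; apply/andP; split; last exact: yB.
  by rewrite leNgt; apply/negP => h; exact: yN h.
have hz0 y : D y -> tsub x y <> @tzero R d.
  move=> Dy h; have := hzn y Dy; rewrite h enorm0 => /andP[h1 _]; lra.
have Kbd y : D y -> be <= K (tsub x y) <= al.
  move=> Dy; have [k1 k2] := Kb _ (hz0 y Dy); have /andP[n1 n2] := hzn y Dy.
  apply/andP; split.
    apply: le_trans k1; rewrite ler_pM2l //; apply: powN_mono => //.
      exact: lt_le_trans r20 n1.
    exact: ltW.
  apply: le_trans k2 _; rewrite ler_pM2l //; exact: powN_mono.
have be0 : 0 <= be by rewrite /be mulr_ge0 // ?powR_ge0 // ltW.
pose f y := tchi E y * K (tsub x y).
pose g y := be - (al + be) * \1_E y.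
have fg y : D y -> g y <= f y.
  move=> Dy; have /andP[k1 k2] := Kbd y Dy; rewrite /f /g tchiE /= indicE.
  by case: (pselect (E y)) => h; [rewrite mem_set //= mulr1n; lra | rewrite memNset //= mulr0n; lra].
have fb y : D y -> `|f y| <= al.
  move=> Dy; have /andP[k1 k2] := Kbd y Dy; rewrite /f tchiE /= indicE ler_norml.
  by case: (pselect (E y)) => h; [rewrite mem_set //= mulr1n; lra | rewrite memNset //= mulr0n; lra].
have gb y : D y -> `|g y| <= al + be.
  move=> Dy; have /andP[k1 k2] := Kbd y Dy; rewrite /g indicE ler_norml.
  by case: (pselect (E y)) => h; [rewrite mem_set //= mulr1n; lra | rewrite memNset //= mulr0n; lra].
have mKz : measurable_fun setT (fun y => K (tsub x y)).
  exact: measurableT_comp mK (tsub_meas x).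
have mf : measurable_fun D f.
  apply: measurable_funTS; apply: measurable_funM => //; exact: tchi_meas.
have mg : measurable_fun D g.
  apply: measurable_funTS; apply: measurable_funB => //.
  apply: measurableT_comp => //; exact: measurable_indic.
have intf := integrable_bnd mD muD_fin mf fb.
have intg := integrable_bnd mD muD_fin mg gb.
have step1 : (\int[lebW H]_(y in D) (g y)%:E <= \int[lebW H]_(y in D) (f y)%:E)%E.
  apply: le_integral => //; move=> y /set_mem Dy; rewrite lee_fin; exact: fg.
apply: le_trans step1.
have mI : measurable_fun D (fun y => (\1_E y : R)) by apply: measurable_funTS; exact: measurable_indic.
have int1 : (lebW H).-integrable D (EFin \o (fun _ => be)).
  apply: (@integrable_bnd _ _ _ _ _ _ be) => //; try exact: measurable_cst.
  by move=> y _; rewrite ger0_norm.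
have int2 : (lebW H).-integrable D (EFin \o (fun y => (al + be) * \1_E y)).
  apply: (@integrable_bnd _ _ _ _ _ _ (al + be)) => //.
    apply: measurable_funTS; apply: measurableT_comp => //; exact: measurable_indic.
  move=> y Dy; have /andP[k1 k2] := Kbd y Dy; rewrite indicE.
  by case: (pselect (E y)) => h; [rewrite mem_set //= mulr1n mulr1 ger0_norm //; lra | rewrite memNset //= mulr0n mulr0 normr0; lra].
have ig : (\int[lebW H]_(y in D) (g y)%:E =
    be%:E * lebW H D - (al + be)%:E * lebW H (E `&` D))%E.
  rewrite (eq_integral (fun y => ((fun _ => be) y)%:E - ((fun y => (al + be) * \1_E y) y)%:E)%E); last first.
    by move=> y _; rewrite -EFinB.
  rewrite integralB_EFin //.
  rewrite (@integral_cst _ _ _ _ _ mD be%:E).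
  rewrite (eq_integral (fun y => (al + be)%:E * (\1_E y)%:E)%E); last first.
    by move=> y _; rewrite EFinM.
  have al0 : 0 <= al by rewrite /al mulr_ge0 // ?powR_ge0 // ltW.
  rewrite ge0_integralZl_EFin //; first by rewrite integral_indic.
  all: try (by move=> y _; rewrite lee_fin).
  all: try (by apply/measurable_EFinP).
  all: try (by rewrite addr_ge0).
rewrite ig.
have muED_le' : (lebW H (E `&` D) <= lebW H D)%E.
  apply: le_measure; rewrite ?inE //; try exact: measurableI; exact: subIsetr.
have finD : lebW H D \is a fin_num by rewrite ge0_fin_numE.
have finED : lebW H (E `&` D) \is a fin_num.
  by rewrite ge0_fin_numE //; exact: le_lt_trans muED_le' muD_fin.
set W := lebW H D in muD_le muD_ge finD muED_le' *.
set M := lebW H (E `&` D) in muED_le finED muED_le' *.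
rewrite -(fineK finD) -(fineK finED) in muD_ge muED_le *.
have M0 : 0 <= fine M by apply: fine_ge0; rewrite /M; exact: measure_ge0.
move: muD_ge muED_le; rewrite !lee_fin => hW hM.
set w := fine W in hW *; set m := fine M in hM M0 *.
have al_le : al <= A * e.
  rewrite /al pow_half // /A -/e -mulrA ler_pM2l // ler_pM2r //.
  by apply: two_pow; rewrite ltW //= ltW.
have rpE : r `^ p = r ^+ d * r `^ s by rewrite /p powD_nat.
have rd0 : 0 < r ^+ d by exact: exprn_gt0.
have rs0 : 0 < r `^ s by exact: powR_gt0.
have CE : C / r `^ s = C * r ^+ d * e.
  rewrite /e rpE invfM mulrA -(mulrA C) mulfV ?gt_eqF // mulr1 //.
rewrite CE beE.
have Q2 : (2 * r) ^+ d = Q * r ^+ d by rewrite exprMn.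
rewrite Q2 in hM.
set k := r ^+ d in rd0 CE Q2 hW hM *.
have al0 : 0 <= al by rewrite /al mulr_ge0 // ?powR_ge0 // ltW.
have h1 : 0 <= lam * e * (w - c0 * k) by rewrite mulr_ge0 ?subr_ge0 // mulr_ge0 // ltW.
have h2 : 0 <= (A * e - al) * m by rewrite mulr_ge0 // subr_ge0.
have h3 : 0 <= (A * e + lam * e) * (gam * (Q * k) - m).
  by rewrite mulr_ge0 ?subr_ge0 // addr_ge0 // mulr_ge0 // ltW.
have h4 : e * k * (gam * Q * (A + lam)) = e * k * C by rewrite gamE.
have h5 : C * 2 = lam * c0 by rewrite /C; field.
nra.
Qed.
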